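(* Let $X^*\subset\mathbb{R}^n$ be a finite set of points and let $X\subset\mathbb{R}^n$ be obtained by perturbing $X^*$, so that each $\boldsymbol x\in X$ has a corresponding unperturbed point $\boldsymbol x^*\in X^*$ (with $g(X)$ and $g(X^* )$ listing values in corresponding order). Let $g\in\mathbb{R}[x_1,\ldots,x_n]$ be gradient-normalized with respect to $X$, i.e. $\|\mathfrak n_{\mathrm g}(g;X)\|=1$. Let $\delta=\max_{\boldsymbol x\in X}\|\boldsymbol x^*-\boldsymbol x\|$. Then $\|g(X)-g(X^* )\|\le\delta+o(\delta)$, where $o(\cdot)$ is Landau's little-o (as $\delta\to0$).
   Context: For a finite point set $Y=\{\boldsymbol y_1,\ldots,\boldsymbol y_N\}$ and a polynomial $h$, $h(Y)=(h(\boldsymbol y_1),\ldots,h(\boldsymbol y_N))^\top$. $\mathfrak n_{\mathrm g}(g;X)=\mathrm{vec}(\nabla g(X))\in\mathbb{R}^{|X|n}$, where $\nabla g(X)$ is the $|X|\times n$ matrix whose rows are the gradients of $g$ at the points of $X$; thus $\|\mathfrak n_{\mathrm g}(g;X)\|^2=\sum_{\boldsymbol x\in X}\|\nabla g(\boldsymbol x)\|^2$. Norms are Euclidean. *)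

(* Defs.v *)
From HB Require Import structures.
From mathcomp Require Import all_boot all_order all_algebra.
From mathcomp Require Import reals.
From mathcomp Require Import mpoly.
Set Implicit Arguments. Unset Strict Implicit. Unset Printing Implicit Defensive.
Import Order.TTheory GRing.Theory Num.Theory.
Local Open Scope ring_scope.

(* Points of R^n are functions 'I_n -> R; finite point sets of size N are
   indexed families 'I_N -> ('I_n -> R), so that X i and Xs i correspond. *)

Definition enorm (R : rcfType) (n : nat) (v : 'I_n -> R) : R :=
  Num.sqrt (\sum_(j < n) v j ^+ 2).

Definition evalpts (R : realType) (n N : nat) (h : {mpoly R[n]})
  (Y : 'I_N -> 'I_n -> R) : 'I_N -> R := fun i => h.@[Y i].

(* gradient of g at x (formal partial derivatives = gradient for polynomials) *)
Definition gradp (R : realType) (n : nat) (g : {mpoly R[n]}) (x : 'I_n -> R)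
  : 'I_n -> R := fun j => (g^`M(j)).@[x].

Definition ngnorm (R : realType) (n N : nat) (g : {mpoly R[n]})
  (X : 'I_N -> 'I_n -> R) : R :=
  Num.sqrt (\sum_(i < N) \sum_(j < n) gradp g (X i) j ^+ 2).

(* delta = max_{x in X} || x* - x ||  (0 if X is empty) *)
Definition pert (R : realType) (n N : nat) (X Xs : 'I_N -> 'I_n -> R) : R :=
  \big[Num.max/0]_(i < N) enorm (fun j => Xs i j - X i j).

(* Main.v *)
Require Import Defs.
From HB Require Import structures.
From mathcomp Require Import all_boot all_order all_algebra.
From mathcomp Require Import reals.
From mathcomp Require Import mpoly.
From mathcomp Require Import ring lra.
Import Order.TTheory GRing.Theory Num.Theory.
Local Open Scope ring_scope.

Section Taylor.
Variables (R : realType) (n : nat) (x : 'I_n -> R).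

Definition lin (p : {mpoly R[n]}) (h : 'I_n -> R) : R :=
  \sum_(j < n) (p^`M(j)).@[x] * h j.

Definition TPb (p : {mpoly R[n]}) (C : R) :=
  forall (y : 'I_n -> R) (d : R), 0 <= d -> d <= 1 ->
   (forall j, `|y j - x j| <= d) ->
   `|p.@[y] - p.@[x] - lin p (fun j => y j - x j)| <= C * d ^+ 2.

Definition TP (p : {mpoly R[n]}) := exists2 C : R, 0 <= C &
  forall (y : 'I_n -> R) (d : R), 0 <= d -> d <= 1 ->
   (forall j, `|y j - x j| <= d) ->
   `|p.@[y] - p.@[x] - lin p (fun j => y j - x j)| <= C * d ^+ 2.

Lemma lin_bound p (h : 'I_n -> R) d : (forall j, `|h j| <= d) ->
  `|lin p h| <= (\sum_(j < n) `|(p^`M(j)).@[x]|) * d.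
Proof.
move=> hd; rewrite mulr_suml; apply: le_trans (ler_norm_sum _ _ _) _.
by apply: ler_sum => j _; rewrite normrM ler_wpM2l.
Qed.

Lemma TP_lip p : TP p -> exists2 B : R, 0 <= B &
  forall (y : 'I_n -> R) (d : R), 0 <= d -> d <= 1 ->
   (forall j, `|y j - x j| <= d) -> `|p.@[y] - p.@[x]| <= B * d.
Proof.
case=> C C0 HC; exists (\sum_(j < n) `|(p^`M(j)).@[x]| + C).
  by rewrite addr_ge0 ?sumr_ge0.
move=> y d d0 d1 hy.
have hl := @lin_bound p (fun j => y j - x j) d hy.
have h1 := HC y d d0 d1 hy.
have h2 : C * d ^+ 2 <= C * d.
  by apply: ler_wpM2l => //; rewrite expr2 -{3}(mul1r d); apply: ler_wpM2r.
have h3 : `|p.@[y] - p.@[x]| <= `|p.@[y] - p.@[x] - lin p (fun j => y j - x j)|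
   + `|lin p (fun j => y j - x j)|.
  by rewrite -{1}(subrK (lin p (fun j => y j - x j)) (p.@[y] - p.@[x])) ler_normD.
rewrite mulrDl; lra.
Qed.

Lemma lin_add p q h : lin (p + q) h = lin p h + lin q h.
Proof.
rewrite /lin -big_split /=; apply: eq_bigr => j _.
by rewrite mderivD mevalD mulrDl.
Qed.

Lemma lin_mul p q h : lin (p * q) h = q.@[x] * lin p h + p.@[x] * lin q h.
Proof.
rewrite /lin !mulr_sumr -big_split /=; apply: eq_bigr => j _.
rewrite mderivM mevalD !mevalM; ring.
Qed.

Lemma TP_add p q : TP p -> TP q -> TP (p + q).
Proof.
case=> C1 C10 H1 [C2 C20 H2]; exists (C1 + C2); first by rewrite addr_ge0.
move=> y d d0 d1 hy; rewrite lin_add !mevalD.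
have := H1 y d d0 d1 hy; have := H2 y d d0 d1 hy.
set a := `|_|; set b := `|_| => hb ha.
have -> : p.@[y] + q.@[y] - (p.@[x] + q.@[x]) -
    (lin p (fun j => y j - x j) + lin q (fun j => y j - x j)) =
  (p.@[y] - p.@[x] - lin p (fun j => y j - x j)) +
  (q.@[y] - q.@[x] - lin q (fun j => y j - x j)) by ring.
by apply: le_trans (ler_normD _ _) _; rewrite mulrDl lerD.
Qed.

Lemma TP_C c : TP c%:MP.
Proof.
exists 0 => // y d _ _ _.
rewrite /lin big1 ?mevalC => [|j _]; last by rewrite mderivC meval0 mul0r.
by rewrite !subrr normr0 mul0r.
Qed.

Lemma TP_X k : TP 'X_k.
Proof.
exists 0 => // y d _ _ _.
have -> : lin 'X_k (fun j => y j - x j) = y k - x k.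
  rewrite /lin (bigD1 k) //= big1 => [|j /negbTE jk].
    rewrite mderivX mevalZ mevalX mnm1E eqxx mul1r big1 ?mul1r ?addr0 //.
    by move=> i _; rewrite mnmBE subnn expr0.
  by rewrite mderivX mevalZ mnm1E eq_sym jk mul0r mul0r.
by rewrite !mevalXU subrr normr0 mul0r.
Qed.

Lemma TP_mul p q : TP p -> TP q -> TP (p * q).
Proof.
move=> hp hq; have [Bp Bp0 Lp] := TP_lip _ hp; have [Bq Bq0 Lq] := TP_lip _ hq.
case: hp => Cp Cp0 Hp; case: hq => Cq Cq0 Hq.
exists (`|q.@[x]| * Cp + `|p.@[x]| * Cq + Bp * Bq).
  by rewrite !addr_ge0 ?mulr_ge0.
move=> y d d0 d1 hy; rewrite lin_mul !mevalM.
set h := (fun j => y j - x j).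
have -> : p.@[y] * q.@[y] - p.@[x] * q.@[x] -
    (q.@[x] * lin p h + p.@[x] * lin q h) =
  q.@[x] * (p.@[y] - p.@[x] - lin p h) + p.@[x] * (q.@[y] - q.@[x] - lin q h)
  + (p.@[y] - p.@[x]) * (q.@[y] - q.@[x]) by ring.
apply: le_trans (ler_normD _ _) _; rewrite [in X in _ <= X]mulrDl [in X in _ <= X]mulrDl.
apply: lerD; first apply: le_trans (ler_normD _ _) _.
  by apply: lerD; rewrite normrM -mulrA ler_wpM2l // ?Hp ?Hq.
rewrite normrM expr2 mulrACA; apply: ler_pM => //; [exact: Lp|exact: Lq].
Qed.

Lemma TP_all p : TP p.
Proof.
rewrite (mpolyE p); elim/big_ind: _ => //.
- by rewrite -mpolyC0; exact: TP_C.
- exact: TP_add.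
move=> m _; rewrite -mul_mpolyC; apply: TP_mul; first exact: TP_C.
rewrite mpolyXE_id; elim/big_ind: _ => //.
- by rewrite -mpolyC1; exact: TP_C.
- exact: TP_mul.
move=> i _; elim: (m i) => [|k IH]; first by rewrite expr0 -mpolyC1; exact: TP_C.
by rewrite exprS; apply: TP_mul => //; exact: TP_X.
Qed.

End Taylor.
Arguments lin {R n} x p h.
Arguments TPb {R n} x p C.
Arguments TP_all {R n} x p.

Lemma CS_sq (R : realType) (n : nat) (u v : 'I_n -> R) :
  (\sum_(j < n) u j * v j) ^+ 2 <=
  (\sum_(j < n) u j ^+ 2) * (\sum_(j < n) v j ^+ 2).
Proof.
have E1 : (\sum_(j < n) u j ^+ 2) * (\sum_(j < n) v j ^+ 2) =
   \sum_(i < n) \sum_(j < n) (u i ^+ 2 * v j ^+ 2).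
  by rewrite mulr_suml; apply: eq_bigr => i _; rewrite mulr_sumr.
have E2 : (\sum_(j < n) u j ^+ 2) * (\sum_(j < n) v j ^+ 2) =
   \sum_(i < n) \sum_(j < n) (u j ^+ 2 * v i ^+ 2).
  by rewrite E1 exchange_big.
have E3 : (\sum_(j < n) u j * v j) ^+ 2 =
   \sum_(i < n) \sum_(j < n) (u i * v i * (u j * v j)).
  by rewrite expr2 mulr_suml; apply: eq_bigr => i _; rewrite mulr_sumr.
have H : 0 <= \sum_(i < n) \sum_(j < n) (u i * v j - u j * v i) ^+ 2.
  by apply: sumr_ge0 => i _; apply: sumr_ge0 => j _; apply: sqr_ge0.
have E4 : \sum_(i < n) \sum_(j < n) (u i * v j - u j * v i) ^+ 2 =
  \sum_(i < n) \sum_(j < n) (u i ^+ 2 * v j ^+ 2)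
  + \sum_(i < n) \sum_(j < n) (u j ^+ 2 * v i ^+ 2)
  - 2 * \sum_(i < n) \sum_(j < n) (u i * v i * (u j * v j)).
  rewrite mulr_sumr -big_split /= -sumrB; apply: eq_bigr => i _.
  rewrite mulr_sumr -big_split /= -sumrB; apply: eq_bigr => j _.
  ring.
rewrite E4 -E1 -E2 -E3 in H; lra.
Qed.

Lemma CS (R : realType) (n : nat) (u v : 'I_n -> R) :
  `|\sum_(j < n) u j * v j| <= enorm u * enorm v.
Proof.
rewrite /enorm -sqrtrM ?sumr_ge0 // => [|j _]; last exact: sqr_ge0.
by rewrite -sqrtr_sqr ler_sqrt ?CS_sq // mulr_ge0 ?sumr_ge0 // => j _; exact: sqr_ge0.
Qed.

Lemma enorm_ge0 (R : realType) (n : nat) (v : 'I_n -> R) : 0 <= enorm v.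
Proof. exact: sqrtr_ge0. Qed.

Lemma coord_le (R : realType) (n : nat) (v : 'I_n -> R) j : `|v j| <= enorm v.
Proof.
rewrite /enorm -sqrtr_sqr ler_sqrt ?sumr_ge0 // => [|i _]; last exact: sqr_ge0.
rewrite (bigD1 j) //= lerDl sumr_ge0 // => i _; exact: sqr_ge0.
Qed.

Lemma pert_ge0 (R : realType) (n N : nat) (X Xs : 'I_N -> 'I_n -> R) :
  0 <= pert X Xs.
Proof.
rewrite /pert; elim/big_ind: _ => // [a b ha hb|i _]; last exact: enorm_ge0.
by rewrite le_max ha.
Qed.

Lemma pert_le (R : realType) (n N : nat) (X Xs : 'I_N -> 'I_n -> R) i :
  enorm (fun j => Xs i j - X i j) <= pert X Xs.
Proof.
by rewrite /pert (bigD1 i) //= le_max lexx.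
Qed.

Arguments CS {R n} u v.
Arguments enorm_ge0 {R n} v.
Arguments coord_le {R n} v j.
Arguments pert_ge0 {R n N} X Xs.
Arguments pert_le {R n N} X Xs i.

Theorem proposition3 (R : realType) (n N : nat) (g : {mpoly R[n]})
  (X : 'I_N -> 'I_n -> R) :
  ngnorm g X = 1 ->
  forall eps : R, 0 < eps ->
  exists2 eta : R, 0 < eta &
    forall Xs : 'I_N -> 'I_n -> R,
      pert X Xs <= eta ->
      enorm (fun i => evalpts g X i - evalpts g Xs i)
        <= pert X Xs + eps * pert X Xs.
Proof.
move=> hg eps eps0.
pose a i := enorm (gradp g (X i)).
have sa : \sum_(i < N) a i ^+ 2 = 1.
  have : ngnorm g X ^+ 2 = 1 by rewrite hg expr1n.
  rewrite /ngnorm sqr_sqrtr; last first.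
    by apply: sumr_ge0 => i _; apply: sumr_ge0 => j _; exact: sqr_ge0.
  move=> <-; apply: eq_bigr => i _; rewrite /a /enorm sqr_sqrtr //.
  by apply: sumr_ge0 => j _; exact: sqr_ge0.
have /fin_all_exists [C HC] : forall i : 'I_N, exists C : R,
    (0 <= C) /\ TPb (X i) g C.
  by move=> i; case: (TP_all (X i) g) => C C0 HC; exists C.
pose K := \sum_(i < N) C i.
have CK : forall i, C i <= K.
  move=> i; rewrite /K (bigD1 i) //= lerDl sumr_ge0 // => k _.
  by case: (HC k).
have K0 : 0 <= K by rewrite sumr_ge0 // => k _; case: (HC k).
pose S := \sum_(i < N) a i.
have S0 : 0 <= S by rewrite sumr_ge0 // => i _; exact: enorm_ge0.
pose M := 2 * K * S + K ^+ 2 * N%:R.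
have M0 : 0 <= M by rewrite addr_ge0 ?mulr_ge0 ?ler0n ?sqr_ge0.
have M1 : 0 < M + 1 by rewrite ltr_wpDl.
exists (Num.min 1 (eps / (M + 1))).
  by rewrite lt_min ltr01 divr_gt0.
move=> Xs; rewrite le_min => /andP [d1 d2].
set d := pert X Xs in d1 d2 *.
have d0 : 0 <= d := pert_ge0 X Xs.
have hMd : M * d <= eps.
  move: d2; rewrite ler_pdivlMr // mulrDr mulr1 => h.
  lra.
have hb : forall i, `|evalpts g X i - evalpts g Xs i| <= a i * d + K * d ^+ 2.
  move=> i; case: (HC i) => _ Hi.
  have hy : forall j, `|Xs i j - X i j| <= d.
    by move=> j; apply: le_trans (coord_le (fun j => Xs i j - X i j) j) (pert_le X Xs i).
  have h1 := Hi (Xs i) d d0 d1 hy.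
  have hl : `|lin (X i) g (fun j => Xs i j - X i j)| <= a i * d.
    apply: le_trans (CS _ _) _; apply: ler_wpM2l; first exact: enorm_ge0.
    exact: pert_le.
  have hC : C i * d ^+ 2 <= K * d ^+ 2 by rewrite ler_wpM2r ?sqr_ge0.
  have h3 : `|g.@[Xs i] - g.@[X i]| <=
      `|g.@[Xs i] - g.@[X i] - lin (X i) g (fun j => Xs i j - X i j)|
      + `|lin (X i) g (fun j => Xs i j - X i j)|.
    by rewrite -{1}(subrK (lin (X i) g (fun j => Xs i j - X i j)) (g.@[Xs i] - g.@[X i])) ler_normD.
  rewrite /evalpts distrC; lra.
have E : d + eps * d = Num.sqrt ((d + eps * d) ^+ 2).
  by rewrite sqrtr_sqr ger0_norm // addr_ge0 ?mulr_ge0 // ltW.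
rewrite /enorm E ler_sqrt ?sqr_ge0 //.
apply: (@le_trans _ _ (\sum_(i < N) (a i * d + K * d ^+ 2) ^+ 2)).
  apply: ler_sum => i _; rewrite -real_normK ?num_real // !expr2; apply: ler_pM => //.
rewrite (eq_bigr (fun i => d ^+ 2 * a i ^+ 2 + (2 * K * d ^+ 3) * a i
    + K ^+ 2 * d ^+ 4)); last by move=> i _; ring.
rewrite !big_split /= -!mulr_sumr sa sumr_const card_ord -mulr_natr.
have h1 : d * (2 * K * S + K ^+ 2 * d * N%:R) <= eps.
  apply: le_trans hMd; rewrite [M * d]mulrC; apply: ler_wpM2l => //.
  rewrite lerD2l -mulrA ler_wpM2l ?sqr_ge0 //.
  by rewrite -{2}(mul1r N%:R) ler_wpM2r.
have h2 : d ^+ 2 * (d * (2 * K * S + K ^+ 2 * d * N%:R)) <= d ^+ 2 * eps.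
  by rewrite ler_wpM2l ?sqr_ge0.
have h3 : 0 <= d ^+ 2 * eps ^+ 2 by rewrite mulr_ge0 ?sqr_ge0.
have -> : (d + eps * d) ^+ 2 = d ^+ 2 + 2 * (d ^+ 2 * eps) + d ^+ 2 * eps ^+ 2 by ring.
rewrite [X in X <= _](_ : _ = d ^+ 2 + d ^+ 2 * (d * (2 * K * S + K ^+ 2 * d * N%:R))); last by rewrite /S; ring.
have : 0 <= d ^+ 2 * eps by rewrite mulr_ge0 ?sqr_ge0 // ltW.
lra.
Qed.
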